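(* Let $\mathbf{T}$ be a random T-tessellation with distribution $\mu$. Then its flip Papangelou kernel is $P_f(T,F)\equiv 1$; that is, for every measurable $\phi:\mathcal{C}_f\to[0,\infty)$, \[ \mathbb{E}\sum_{F\in\mathcal{F}_{\mathbf{T}}}\phi(F^{-1},F\mathbf{T})=\mathbb{E}\sum_{F\in\mathcal{F}_{\mathbf{T}}}\phi(F,\mathbf{T}). \]
   Context: $D\subset\mathbb{R}^2$ is a compact convex polygon. A polygonal tessellation of $D$ is a finite subdivision into polygonal cells with disjoint interiors; vertices are cell vertices; edges are line segments contained in cell edges, ending at vertices, with no other vertex between their ends; segments are maximal unions of aligned contiguous edges. A T-vertex lies at the intersection of exactly three edges, two of them aligned. A T-tessellation of $D$ is a polygonal tessellation all of whose vertices other than those of $D$ are T-vertices, with no pair of distinct aligned segments; $\mathcal{T}$ is the set of these (with the hitting $\sigma$-algebra). An internal segment (not on $\partial D$) is blocking if it consists of more than one edge. A flip of $T$ is the deletion of an edge at an end of an internal blocking segment, combined with adding a new edge extending the segment that was blocked at the freed vertex up to the next segment; $\mathcal{F}_T$ is the finite set of flips of $T$, $FT$ the result of applying $F$, and $F^{-1}\in\mathcal{F}_{FT}$ the flip reversing $F$. $\mathcal{C}_f=\{(F,T):T\in\mathcal{T},F\in\mathcal{F}_T\}$. For a finite set $L$ of lines hitting $D$, $\mathcal{T}(L)$ is the set of T-tessellations whose internal segments are supported exactly by the lines of $L$. With $\mathbf{L}$ the unit-intensity Poisson line process restricted to $D$, $\mu(A)=Z^{-1}\mathbb{E}\sum_{T\in\mathcal{T}(\mathbf{L})}\mathbf{1}_A(T)$,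 $Z$ a normalizing constant. The flip Campbell measure of a random T-tessellation $\mathbf{T}$ is $C_f(\phi)=\mathbb{E}\sum_{F\in\mathcal{F}_{\mathbf{T}}}\phi(F^{-1},F\mathbf{T})$, and its flip Papangelou kernel is the function $P_f$ with $C_f(\phi)=\mathbb{E}\sum_{F\in\mathcal{F}_{\mathbf{T}}}\phi(F,\mathbf{T})P_f(\mathbf{T},F)$ for all $\phi$. *)

(* Defs.v *)
From mathcomp Require Import all_boot all_order all_algebra.
From mathcomp Require Import all_classical all_reals all_analysis.
Import Order.TTheory GRing.Theory Num.Theory numFieldNormedType.Exports.
Set Implicit Arguments. Unset Strict Implicit. Unset Printing Implicit Defensive.
Local Open Scope classical_set_scope.
Local Open Scope ring_scope.

Section TTess.
Variable R : realType.

Definition pt := (R * R)%type.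

Definition aff (a b : pt) (t : R) : pt :=
  (a.1 + t * (b.1 - a.1), a.2 + t * (b.2 - a.2)).

Definition cseg (a b : pt) : set pt := [set x | exists t, 0 <= t <= 1 /\ x = aff a b t].
Definition oseg (a b : pt) : set pt := [set x | exists t, 0 < t < 1 /\ x = aff a b t].
Definition lineL (a b : pt) : set pt := [set x | exists t, x = aff a b t].

Definition is_cvx_polygon (D : set pt) : Prop :=
  (exists (n : nat) (u : nat -> pt) (c : nat -> R),
     D = [set x | forall i, (i < n)%N -> (u i).1 * x.1 + (u i).2 * x.2 <= c i]) /\
  compact D /\ (exists x, interior D x).

Definition bd (D : set pt) : set pt := D `\` interior D.
Definition vertexD (D : set pt) (x : pt) : Prop :=
  D x /\ ~ (exists y z, D y /\ D z /\ y <> z /\ oseg y z x).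

Definition endpt (S : set pt) (p : pt) : Prop := exists q, q <> p /\ S = cseg p q.
Definition relint (S : set pt) (x : pt) : Prop :=
  exists a b, a <> b /\ S = cseg a b /\ oseg a b x.
Definition aligned (S S' : set pt) : Prop :=
  exists a b, a <> b /\ S `<=` lineL a b /\ S' `<=` lineL a b.

(** A tessellation is encoded by the set of its internal segments. *)
Definition tess := set (set pt).

Definition is_Ttess (D : set pt) (T : tess) : Prop :=
  finite_set T /\
  (forall S, T S -> exists a b, a <> b /\ S = cseg a b /\ D a /\ D b /\
                         oseg a b `<=` interior D) /\
  (forall S p, T S -> endpt S p ->
     (bd D p /\ ~ vertexD D p) \/ (exists S', T S' /\ S' <> S /\ relint S' p)) /\
  (forall S S', T S -> T S' -> S <> S' ->
     ~ aligned S S' /\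
     (forall x, S x -> S' x -> (endpt S x /\ relint S' x) \/ (endpt S' x /\ relint S x))).

(** the union of the cell edges (closed set identified with T) *)
Definition skel (D : set pt) (T : tess) : set pt := bd D `|` \bigcup_(S in T) S.

Definition vtx (T : tess) (x : pt) : Prop := exists S, T S /\ endpt S x.

Definition rayp (u v : pt) (t : R) : pt := (v.1 + t * (v.1 - u.1), v.2 + t * (v.2 - u.2)).

(** A flip F = (a, v) of T: the edge [a,v] at the end a of the internal blocking
    segment [a,b] (v being the vertex of ]a,b[ nearest to a) is deleted, and the
    segment [u,v] blocked at v is extended beyond v up to the first point w of the
    next segment (or of the boundary).  T' is the result, w the new endpoint. *)
Definition flip_rel (D : set pt) (T : tess) (F : pt * pt) (T' : tess) (w : pt) : Prop :=
  let a := F.1 in let v := F.2 in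
  exists b u, a <> b /\ T (cseg a b) /\ u <> v /\ T (cseg u v) /\
    cseg u v <> cseg a b /\ oseg a b v /\
    (forall x, oseg a v x -> ~ vtx T x) /\
    (exists t, 0 < t /\ w = rayp u v t /\ skel D T w /\
       (forall t', 0 < t' < t -> ~ skel D T (rayp u v t'))) /\
    T' = (T `\` [set cseg a b; cseg u v]) `|` [set cseg v b; cseg u w].

Definition flips (D : set pt) (T : tess) : set (pt * pt) :=
  [set F | exists T' w, flip_rel D T F T' w /\ is_Ttess D T'].

(** FT and F^{-1} (F^{-1} = (w, v) removes the new edge [v,w]) *)
Definition flipT (D : set pt) (T : tess) (F : pt * pt) : tess :=
  xget T [set T' | exists w, flip_rel D T F T' w].
Definition flipinv (D : set pt) (T : tess) (F : pt * pt) : pt * pt :=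
  (xget F.1 [set w | exists T', flip_rel D T F T' w], F.2).

(** Hitting sigma-algebra on tessellations (via the closed set skel D T). *)
Definition hitG (D : set pt) : set (set tess) :=
  [set A | exists K : set pt, compact K /\ A = [set T | skel D T `&` K !=set0]].
Definition ttype (D : set pt) := g_sigma_algebraType (hitG D).

Definition lineP (th p : R) : set pt := [set x | x.1 * cos th + x.2 * sin th = p].

Definition Hpar (D : set pt) : set (R * R) :=
  [set q | 0 <= q.1 < pi /\ exists x, D x /\ lineP q.1 q.2 x].

Definition lines_of (s : seq (R * R)) : set (set pt) :=
  [set l | exists2 q, q \in s & l = lineP q.1 q.2].

Definition TL (D : set pt) (L : set (set pt)) : set tess :=
  [set T | is_Ttess D T /\
     (forall S, T S -> exists l, L l /\ S `<=` l) /\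
     (forall l, L l -> exists S, T S /\ S `<=` l)].

Fixpoint iint (n : nat) (f : seq (R * R) -> \bar R) : \bar R :=
  match n with
  | 0%N => f [::]
  | n'.+1 => (\int[lebesgue_measure]_th \int[lebesgue_measure]_p
               iint n' (fun s => f ((th, p) :: s)))%E
  end.

Definition indH (D : set pt) (s : seq (R * R)) : bool :=
  `[< forall q, q \in s -> Hpar D q >].

Definition massH (D : set pt) : \bar R :=
  iint 1 (fun s => if indH D s then 1%E else 0%E).

(** E G(L) for L the Poisson line process with intensity d theta dp restricted to D *)
Definition poissonE (D : set pt) (G : set (set pt) -> \bar R) : \bar R :=
  (\sum_(n <oo) ((expR (- fine (massH D)) / (n`!)%:R)%:E *
      iint n (fun s => if indH D s then G (lines_of s) else 0%E)))%E.

Definition unnorm (D : set pt) (h : tess -> \bar R) : \bar R :=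
  poissonE D (fun L => (\sum_(T \in TL D L) h T)%E).

Definition Zc (D : set pt) : \bar R := unnorm D (fun _ => 1%E).

Definition muE (D : set pt) (h : tess -> \bar R) : \bar R :=
  (((fine (Zc D))^-1)%:E * unnorm D h)%E.

End TTess.

(* Main.v *)
Require Import Defs.
From mathcomp Require Import all_boot all_order all_algebra.
From mathcomp Require Import all_classical all_reals all_analysis.
From mathcomp Require Import ring lra.
Import Order.TTheory GRing.Theory Num.Theory numFieldNormedType.Exports.
Local Open Scope classical_set_scope.
Local Open Scope ring_scope.

Set Implicit Arguments. Unset Strict Implicit.
Section Geo.
Variable R : realType.
Implicit Types a b p q u v x y : pt R.

Lemma aff_aff a b s s' r : aff (aff a b s) (aff a b s') r = aff a b (s + r * (s' - s)).
Proof. rewrite /aff /=; congr pair; ring. Qed.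
Lemma aff0 a b : aff a b 0 = a.
Proof. case: a => a1 a2; rewrite /aff /=; congr pair; ring. Qed.
Lemma aff1 a b : aff a b 1 = b.
Proof. case: a; case: b => b1 b2 a1 a2; rewrite /aff /=; congr pair; ring. Qed.
Lemma aff_sym a b t : aff b a t = aff a b (1 - t).
Proof. rewrite /aff /=; congr pair; ring. Qed.
Lemma rayp_aff u v t : rayp u v t = aff u v (1 + t).
Proof. rewrite /rayp /aff /=; congr pair; ring. Qed.

Lemma aff_inj a b s s' : a <> b -> aff a b s = aff a b s' -> s = s'.
Proof.
case: a => a1 a2; case: b => b1 b2 ab [e1 e2].
apply/eqP; rewrite -subr_eq0; apply/negPn/negP => hs; apply: ab.
have h1 : (s - s') * (b1 - a1) = 0 by rewrite mulrBl; apply/eqP; rewrite subr_eq0; apply/eqP;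
  move/(congr1 (fun z => z - a1)): e1; rewrite !(addrC a1) !addrK.
have h2 : (s - s') * (b2 - a2) = 0 by rewrite mulrBl; apply/eqP; rewrite subr_eq0; apply/eqP;
  move/(congr1 (fun z => z - a2)): e2; rewrite !(addrC a2) !addrK.
move/eqP: h1; rewrite mulf_eq0 (negPf hs) /= subr_eq0 => /eqP ->.
by move/eqP: h2; rewrite mulf_eq0 (negPf hs) /= subr_eq0 => /eqP ->.
Qed.

Lemma cseg_sub a b : cseg a b `<=` cseg b a.
Proof.
move=> x [t [/andP[t0 t1] ->]]; exists (1 - t); split.
  by apply/andP; split; lra.
by rewrite [in RHS]aff_sym; congr aff; ring.
Qed.
Lemma cseg_sym a b : cseg a b = cseg b a.
Proof. by apply/seteqP; split; apply: cseg_sub. Qed.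
Lemma oseg_sub a b : oseg a b `<=` oseg b a.
Proof.
move=> x [t [/andP[t0 t1] ->]]; exists (1 - t); split.
  by apply/andP; split; lra.
by rewrite [in RHS]aff_sym; congr aff; ring.
Qed.
Lemma oseg_sym a b : oseg a b = oseg b a.
Proof. by apply/seteqP; split; apply: oseg_sub. Qed.

Lemma cseg_l a b : cseg a b a.
Proof. by exists 0; rewrite aff0; split=> //; apply/andP; split; lra. Qed.
Lemma cseg_r a b : cseg a b b.
Proof. by exists 1; rewrite aff1; split=> //; apply/andP; split; lra. Qed.
Lemma oseg_cseg a b : oseg a b `<=` cseg a b.
Proof. by move=> x [t [/andP[? ?] ->]]; exists t; split=> //; apply/andP; split; lra. Qed.

Lemma cseg_eq a b p q : a <> b -> cseg a b = cseg p q ->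
  (p = a /\ q = b) \/ (p = b /\ q = a).
Proof.
move=> ab e.
have : cseg a b p by rewrite e; apply: cseg_l.
have : cseg a b q by rewrite e; apply: cseg_r.
have : cseg p q a by rewrite -e; apply: cseg_l.
have : cseg p q b by rewrite -e; apply: cseg_r.
move=> [r' [/andP[r'0 r'1] eb]] [r [/andP[r0 r1] ea]] [s' [/andP[s'0 s'1] eqq]] [s [/andP[s0 s1] ep]].
subst p q.
rewrite aff_aff in ea; rewrite aff_aff in eb.
have e0 : 0 = s + r * (s' - s) by apply: (aff_inj ab); rewrite aff0.
have e1 : 1 = s + r' * (s' - s) by apply: (aff_inj ab); rewrite aff1.
have [s0e|sn0] := eqVneq s 0.
  subst s.
  left; rewrite aff0; split=> //.
  have hr' : r' = 1 by nra.
  have -> : s' = 1 by nra.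
  by rewrite aff1.
have hr : r = 1.
  have : (1 - r) * s = 0 by nra.
  move/eqP; rewrite mulf_eq0 (negPf sn0) orbF subr_eq0 => /eqP <-. done.
subst r.
have s'0' : s' = 0 by lra.
subst s'.
have -> : s = 1 by nra.
by right; rewrite aff0 aff1.
Qed.

Lemma endpt_cseg a b p : a <> b -> endpt (cseg a b) p -> p = a \/ p = b.
Proof. by move=> ab [q [_ /(cseg_eq ab) [[-> _]|[-> _]]]]; [left|right]. Qed.
Lemma endpt_l a b : a <> b -> endpt (cseg a b) a.
Proof. by move=> ab; exists b; split=> //; move=> h; apply: ab. Qed.
Lemma endpt_r a b : a <> b -> endpt (cseg a b) b.
Proof. by move=> ab; exists a; rewrite cseg_sym; split=> // h; apply: ab. Qed.

Lemma oseg_neq_l a b x : a <> b -> oseg a b x -> x <> a.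
Proof. move=> ab [t [/andP[t0 t1] ->]]; rewrite -{2}(aff0 a b) => /(aff_inj ab); lra. Qed.
Lemma oseg_neq_r a b x : a <> b -> oseg a b x -> x <> b.
Proof. move=> ab [t [/andP[t0 t1] ->]]; rewrite -{2}(aff1 a b) => /(aff_inj ab); lra. Qed.

Lemma relint_cseg a b x : a <> b -> relint (cseg a b) x -> oseg a b x.
Proof.
move=> ab [p [q [pq [/(cseg_eq ab) [[-> ->]|[-> ->]] h]]]] //.
by rewrite oseg_sym.
Qed.
Lemma oseg_relint a b x : a <> b -> oseg a b x -> relint (cseg a b) x.
Proof. by move=> ab h; exists a, b. Qed.

Lemma cseg_line a b x y : x <> y -> cseg a b x -> cseg a b y -> cseg a b `<=` lineL x y.
Proof.
move=> xy [s [_ ex]] [s' [_ ey]] z [t [_ ->]].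
have ss : s' - s != 0.
  by rewrite subr_eq0; apply/eqP => es; apply: xy; rewrite ex ey es.
exists ((t - s) / (s' - s)); rewrite ex ey aff_aff; congr aff; field; exact: ss.
Qed.

Lemma cseg_sub_line a b : cseg a b `<=` lineL a b.
Proof. by move=> x [t [_ ->]]; exists t. Qed.


Lemma affL a b s r : aff a (aff a b s) r = aff a b (r * s).
Proof. rewrite /aff /=; congr pair; ring. Qed.
Lemma affR1 a b s r : aff (aff a b s) b r = aff a b (s + r * (1 - s)).
Proof. rewrite /aff /=; congr pair; ring. Qed.
Lemma affR0 a b s r : aff (aff a b s) a r = aff a b (s - r * s).
Proof. rewrite /aff /=; congr pair; ring. Qed.

Lemma rayp_inj u v t1 t2 : u <> v -> rayp u v t1 = rayp u v t2 -> t1 = t2.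
Proof. by move=> uv; rewrite !rayp_aff => /(aff_inj uv); lra. Qed.

Lemma rayp_back a b r t : rayp b (aff a b r) t = aff a b (r - t * (1 - r)).
Proof. rewrite /rayp /aff /=; congr pair; ring. Qed.

Lemma oseg_ray u v t : u <> v -> 0 < t -> oseg (rayp u v t) u v.
Proof.
move=> uv t0; exists (t / (1 + t)); split.
  apply/andP; split; first by apply: divr_gt0; lra.
  by rewrite ltr_pdivrMr; lra.
rewrite rayp_aff affR0 -[LHS](aff1 u v); congr aff.
have h : 1 + t != 0 by rewrite gt_eqF //; clear uv; lra.
by field.
Qed.

Lemma cseg_ray_sub u v t : 0 < t -> cseg u v `<=` cseg u (rayp u v t).
Proof.
move=> t0 x [r [/andP[r0 r1] ->]]; exists (r / (1 + t)); split.
  apply/andP; split; first by apply: divr_ge0; lra.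
  by rewrite ler_pdivrMr; lra.
rewrite rayp_aff affL; congr aff.
have h : 1 + t != 0 by rewrite gt_eqF //; lra.
by field.
Qed.

Lemma oseg_wv u v t x : 0 < t -> oseg (rayp u v t) v x ->
  exists t', 0 < t' < t /\ x = rayp u v t'.
Proof.
move=> t0 [r [/andP[r0 r1] ->]]; exists (t * (1 - r)); split.
  by apply/andP; split; nra.
rewrite !rayp_aff affR1; congr aff; ring.
Qed.

Lemma endpt_in S x : endpt S x -> S x.
Proof. by move=> [q [_ ->]]; apply: cseg_l. Qed.
Lemma relint_in S x : relint S x -> S x.
Proof. by move=> [p [q [_ [-> h]]]]; apply: oseg_cseg. Qed.

Lemma aligned2 a b p q x y : a <> b -> p <> q -> x <> y ->
  cseg a b x -> cseg a b y -> cseg p q x -> cseg p q y -> aligned (cseg a b) (cseg p q).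
Proof.
move=> ab pq xy h1 h2 h3 h4; exists x, y; split=> //.
by split; apply: cseg_line.
Qed.

End Geo.

Section Flip.
Variable R : realType.
Variable D : set (pt R).
Implicit Types (T : tess R) (a b p q u v x y w : pt R).

Lemma seg_of T S : is_Ttess D T -> T S -> exists a b, a <> b /\ S = cseg a b.
Proof. by move=> [_ [h _]] /h [a [b [ab [-> _]]]]; exists a, b. Qed.

Lemma seg_eq2 T S S' x y : is_Ttess D T -> T S -> T S' ->
  S x -> S' x -> S y -> S' y -> x <> y -> S = S'.
Proof.
move=> hT TS TS' Sx S'x Sy S'y xy; apply: contrapT => SS'.
have [_ [_ [_ h4]]] := hT; have [na _] := h4 _ _ TS TS' SS'; apply: na.
have [a [b [ab eS]]] := seg_of hT TS; have [p [q [pq eS']]] := seg_of hT TS'.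
subst S S'; exact: (aligned2 ab pq xy).
Qed.

Lemma seg_endv T u1 u2 v : is_Ttess D T -> T (cseg u1 v) -> T (cseg u2 v) ->
  u1 <> v -> u2 <> v -> u1 = u2.
Proof.
move=> hT T1 T2 u1v u2v.
have e : cseg u1 v = cseg u2 v.
  apply: contrapT => ne; have [_ [_ [_ h4]]] := hT.
  have [_ h] := h4 _ _ T1 T2 ne; have := h v (cseg_r _ _) (cseg_r _ _).
  case=> [[_ /(relint_cseg u2v)]|[_ /(relint_cseg u1v)]] /oseg_neq_r; by apply.
by case: (cseg_eq u1v e) => [[-> _]//|[e2 _]]; exfalso; apply: u2v.
Qed.

Lemma seg_enda T a b1 b2 v : is_Ttess D T -> T (cseg a b1) -> T (cseg a b2) ->
  a <> b1 -> a <> b2 -> oseg a b1 v -> oseg a b2 v -> b1 = b2.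
Proof.
move=> hT T1 T2 ab1 ab2 v1 v2.
have av : a <> v by move=> e; apply: (oseg_neq_l ab1 v1); rewrite e.
have e : cseg a b1 = cseg a b2.
  apply: (seg_eq2 hT T1 T2 (cseg_l _ _) (cseg_l _ _) (oseg_cseg v1) (oseg_cseg v2) av).
by have [[_ ->]|[e1 _]] := cseg_eq ab1 e; [|exfalso; apply: ab1].
Qed.

Lemma flip_uniq T F T1 w1 T2 w2 : is_Ttess D T ->
  flip_rel D T F T1 w1 -> flip_rel D T F T2 w2 -> T1 = T2 /\ w1 = w2.
Proof.
case: F => a v hT.
move=> [b1 [u1 [ab1 [Tab1 [uv1 [Tuv1 [_ [vab1 [_ [[t1 [t10 [ew1 [skw1 min1]]]] eT1]]]]]]]]]].
move=> [b2 [u2 [ab2 [Tab2 [uv2 [Tuv2 [_ [vab2 [_ [[t2 [t20 [ew2 [skw2 min2]]]] eT2]]]]]]]]]].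
simpl in *.
have eb := seg_enda hT Tab1 Tab2 ab1 ab2 vab1 vab2; subst b2.
have eu := seg_endv hT Tuv1 Tuv2 uv1 uv2; subst u2.
have et : t1 = t2.
  have [lt|gt|//] := ltgtP t1 t2.
    by exfalso; apply: (min2 t1); [apply/andP; split|rewrite -ew1].
  by exfalso; apply: (min1 t2); [apply/andP; split|rewrite -ew2].
by subst; split.
Qed.


Lemma set1E' (X : Type) (x y : X) : [set x] y -> y = x.
Proof. by []. Qed.

Lemma seg_skel T S x : T S -> S x -> skel D T x.
Proof. by move=> TS Sx; right; exists S. Qed.

Lemma oseg_interior T a b x : is_Ttess D T -> T (cseg a b) -> a <> b -> oseg a b x ->
  interior D x.
Proof.
move=> [_ [h2 _]] /h2 [a0 [b0 [ab0 [e [_ [_ sub]]]]]] ab xo; apply: sub.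
by case: (cseg_eq ab e) => [[-> ->]|[-> ->]] //; rewrite oseg_sym.
Qed.

Lemma flip_rev T a v T' w : is_Ttess D T ->
  flip_rel D T (a, v) T' w -> flip_rel D T' (w, v) T a.
Proof.
move=> hT.
move=> [b [u [ab [Tab [uv [Tuv [uvab [vab [novtx [[t [t0 [ew [skw minw]]]] eT']]]]]]]]]].
simpl in *.
have [_ [_ [h3 h4]]] := hT.
have [r [/andP[r0 r1] ev]] := vab.
have bv : b <> v by move=> e; apply: (oseg_neq_r ab vab); rewrite e.
have av : a <> v by move=> e; apply: (oseg_neq_l ab vab); rewrite e.
have wu : w <> u.
  by rewrite ew -{2}(aff0 u v) rayp_aff => /(aff_inj uv); lra.
have wv : w <> v.
  by rewrite ew -{2}(aff1 u v) rayp_aff => /(aff_inj uv); lra.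
have vuw : cseg u w v by rewrite ew; apply: (cseg_ray_sub t0); apply: cseg_r.
have nTuw : ~ T (cseg u w).
  move=> Tuw; have e := seg_eq2 hT Tuv Tuw (cseg_l _ _) (cseg_l _ _) (cseg_r _ _) vuw uv.
  by case: (cseg_eq uv e) => [[_ e2]|[e2 _]]; [apply: wv|apply: uv].
have nTvb : ~ T (cseg v b).
  move=> Tvb; have e := seg_eq2 hT Tab Tvb (cseg_r _ _) (cseg_r _ _) (oseg_cseg vab) (cseg_l _ _) bv.
  by case: (cseg_eq ab e) => [[e2 _]|[e2 _]]; [apply: av|apply: bv].
have T'uw : T' (cseg u w) by rewrite eT'; right; right.
have T'vb : T' (cseg v b) by rewrite eT'; right; left.
have T'old S : T S -> S <> cseg a b -> S <> cseg u v -> T' S.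
  by move=> TS h1 h2; rewrite eT'; left; split=> // -[].
exists u, b; split=> //; split; first by rewrite cseg_sym.
split=> //; split; first by rewrite cseg_sym.
split.
  move=> e; case: (cseg_eq bv e) => [[e1 e2]|[e1 e2]]; first by apply: uv.
  by apply: wv.
split; first by rewrite ew; apply: oseg_ray.
split.
  move=> x /(fun h => @oseg_wv _ u v t x t0 (eq_ind w (fun z => oseg z v x) h _ ew)).
  move=> [t' [/andP[t'0 t'1] ex]] [S [T'S eS]].
  have skx : ~ skel D T x by rewrite ex; apply: minw; apply/andP; split.
  move: T'S; rewrite eT' => -[[TS _]|[eS1|eS1]]; try have {}eS1 := set1E' eS1.
  - by apply: skx; apply: (seg_skel TS); apply: endpt_in.
  - subst S; case: (endpt_cseg (nesym bv) eS) => e1; rewrite e1 in ex skx.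
      by move: ex; rewrite -{1}(aff1 u v) rayp_aff => /(aff_inj uv); lra.
    by apply: skx; apply: (seg_skel Tab); apply: cseg_r.
  - subst S; case: (endpt_cseg (nesym wu) eS) => e1; rewrite e1 in ex skx.
      by move: ex; rewrite -{1}(aff0 u v) rayp_aff => /(aff_inj uv); lra.
    by move: ex; rewrite ew => /(rayp_inj uv); lra.
split.
  exists (r / (1 - r)); split; first by apply: divr_gt0; lra.
  split.
    rewrite ev rayp_back -{1}(aff0 a b); congr aff.
    have h : 1 - r != 0 by rewrite gt_eqF //; lra.
    by field.
  split.
    case: (h3 _ a Tab (endpt_l ab)) => [[bda _]|[S' [TS' [S'ab rS']]]]; first by left.
    have S'a := relint_in rS'.
    have S'uv : S' <> cseg u v.
      move=> e; subst S'; apply: uvab.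
      exact: (seg_eq2 hT Tuv Tab S'a (cseg_l _ _) (cseg_r _ _) (oseg_cseg vab) av).
    exact: (seg_skel (T'old _ TS' S'ab S'uv)).
  move=> t'' /andP[t''0 t''1] sk.
  have hq : 0 < r - t'' * (1 - r) < r.
    apply/andP; split; last by nra.
    move: t''1; rewrite ltr_pdivlMr; lra.
  move: hq => /andP[q0 qr].
  set q := r - t'' * (1 - r) in q0 qr.
  have ey : rayp b v t'' = aff a b q by rewrite ev rayp_back.
  rewrite ey in sk.
  have yab : oseg a b (aff a b q) by exists q; split=> //; apply/andP; split; lra.
  have yav : oseg a v (aff a b q).
    exists (q / r); split.
      apply/andP; split; first by apply: divr_gt0; lra.
      by rewrite ltr_pdivrMr; lra.
    rewrite ev affL; congr aff.
    have h : r != 0 by rewrite gt_eqF //; lra.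
    by field.
  have yv : aff a b q <> v by rewrite ev => /(aff_inj ab); lra.
  case: sk => [[Dy nint]|[S T'S Sy]].
    by apply: nint; apply: (oseg_interior hT Tab ab yab).
  move: T'S; rewrite eT' => -[[TS nS]|[eS|eS]]; try have {}eS := set1E' eS.
  - have Sab : S <> cseg a b by move=> e; apply: nS; left.
    have [_ h] := h4 _ _ TS Tab Sab.
    case: (h _ Sy (oseg_cseg yab)) => [[eSy _]|[eab _]].
      by apply: (novtx _ yav); exists S.
    case: (endpt_cseg ab eab) => e1.
      by move: e1; rewrite -{2}(aff0 a b) => /(aff_inj ab); lra.
    by move: e1; rewrite -{2}(aff1 a b) => /(aff_inj ab); lra.
  - subst S; move: Sy => [q' [/andP[q'0 q'1]]].
    by rewrite ev affR1 => /(aff_inj ab); nra.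
  - subst S.
    have al : aligned (cseg u v) (cseg a b).
      exists (aff a b q), v; split=> //; split.
        apply: subset_trans (cseg_ray_sub (u:=u) (v:=v) t0) _; rewrite -ew.
        exact: cseg_line.
      by apply: cseg_line => //; [apply: oseg_cseg|apply: oseg_cseg].
    by have [] := h4 _ _ Tuv Tab uvab.
rewrite eT'; apply/seteqP; split=> S.
  move=> TS.
  have [->|Sab] := pselect (S = cseg a b); first by right; right; rewrite cseg_sym.
  have [->|Suv] := pselect (S = cseg u v); first by right; left; rewrite cseg_sym.
  left; split; first by left; split=> // -[].
  by move=> [e|e]; have {}e := set1E' e; subst S; [apply: nTuw; rewrite cseg_sym|apply: nTvb; rewrite cseg_sym].
move=> [[[[TS _]|[e|e]] nS]|[e|e]]; try (have {}e := set1E' e; subst S); try done.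
- by exfalso; apply: nS; right; rewrite /= cseg_sym.
- by exfalso; apply: nS; left; rewrite /= cseg_sym.
- by rewrite cseg_sym.
- by rewrite cseg_sym.
Qed.


Lemma flips_finite T : is_Ttess D T -> finite_set (flips D T).
Proof.
move=> hT; have [Tfin _] := hT.
set E := \bigcup_(S in T) [set x | endpt S x].
have Efin : finite_set E.
  apply: bigcup_finite => // S TS; have [a [b [ab ->]]] := seg_of hT TS.
  apply: (sub_finite_set _ (finite_set2 a b)) => x /(endpt_cseg ab) [->|->]; by [left|right].
apply: (sub_finite_set _ (finite_setX Efin Efin)).
move=> [a v] [T' [w [[b [u [ab [Tab [uv [Tuv _]]]]]] _]]]; split.
  by exists (cseg a b) => //; apply: endpt_l.
by exists (cseg u v) => //; apply: endpt_r.
Qed.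

Lemma flip_spec T F : is_Ttess D T -> flips D T F ->
  flip_rel D T F (flipT D T F) (flipinv D T F).1 /\ is_Ttess D (flipT D T F).
Proof.
move=> hT [T0 [w0 [rel0 hT0]]].
have [w1 rel1] : exists w1, flip_rel D T F (flipT D T F) w1.
  by apply: (xgetPex T (P := [set T' | exists w, flip_rel D T F T' w])); exists T0, w0.
have [T2 rel2] : exists T2, flip_rel D T F T2 (flipinv D T F).1.
  by apply: (xgetPex F.1 (P := [set w | exists T', flip_rel D T F T' w])); exists w0, T0.
have [e1 e1'] := flip_uniq hT rel0 rel1.
have [e2 e2'] := flip_uniq hT rel0 rel2.
by rewrite -e1 -e2'; split.
Qed.

Lemma flip_invol T F : is_Ttess D T -> flips D T F ->
  flips D (flipT D T F) (flipinv D T F) /\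
  flipT D (flipT D T F) (flipinv D T F) = T /\
  flipinv D (flipT D T F) (flipinv D T F) = F.
Proof.
case: F => a v hT hF.
have [rel hT'] := flip_spec hT hF.
set T' := flipT D T (a, v) in rel hT' *.
have -> : flipinv D T (a, v) = ((flipinv D T (a, v)).1, v) by [].
set w := (flipinv D T (a, v)).1 in rel *.
have rrev := flip_rev hT rel.
have hF' : flips D T' (w, v) by exists T, a.
have [rel' _] := flip_spec hT' hF'.
have [e1 e2] := flip_uniq hT' rrev rel'.
split=> //; split; first by rewrite -e1.
by rewrite [LHS]surjective_pairing -e2.
Qed.

Definition lineish (L : set (set (pt R))) :=
  forall l, L l -> forall x y t, l x -> l y -> l (aff x y t).

Lemma TL_flip (L : set (set (pt R))) T F T' w : lineish L -> TL D L T ->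
  flip_rel D T F T' w -> is_Ttess D T' -> TL D L T'.
Proof.
case: F => a v hL [hT [h1 h2]].
move=> [b [u [ab [Tab [uv [Tuv [uvab [vab [novtx [[t [t0 [ew [skw minw]]]] eT']]]]]]]]]] hT'.
simpl in *.
have [r [/andP[r0 r1] ev]] := vab.
have vbab : cseg v b `<=` cseg a b.
  move=> x [q [/andP[q0 q1] ->]]; rewrite ev affR1; exists (r + q * (1 - r)); split=> //.
  by apply/andP; split; nra.
have uwl l : L l -> cseg u v `<=` l -> cseg u w `<=` l.
  move=> Ll sub x [q [_ ->]]; rewrite ew rayp_aff affL.
  by apply: (hL _ Ll); apply: sub; [apply: cseg_l|apply: cseg_r].
split=> //; split.
  move=> S; rewrite eT' => -[[TS _]|[e|e]]; first exact: h1.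
  - have {}e := set1E' e; subst S.
    by have [l [Ll sub]] := h1 _ Tab; exists l; split=> //; apply: subset_trans sub.
  - have {}e := set1E' e; subst S.
    by have [l [Ll sub]] := h1 _ Tuv; exists l; split=> //; apply: uwl.
move=> l Ll; have [S [TS sub]] := h2 _ Ll.
have [eS|Sab] := pselect (S = cseg a b).
  rewrite eS in sub.
  by exists (cseg v b); split; [rewrite eT'; right; left|apply: subset_trans sub].
have [eS|Suv] := pselect (S = cseg u v).
  rewrite eS in sub.
  by exists (cseg u w); split; [rewrite eT'; right; right|apply: uwl].
by exists S; split=> //; rewrite eT'; left; split=> // -[].
Qed.

End Flip.
Set Implicit Arguments. Unset Strict Implicit.

Section Sum.
Variable R : realType.
Local Open Scope ereal_scope.

Lemma fsbig_esum (I : choiceType) (A : set I) (a : I -> \bar R) :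
  (forall i, 0 <= a i) -> finite_set (A `&` a @^-1` [set~ 0]) ->
  \sum_(i \in A) a i = \esum_(i in A) a i.
Proof.
move=> a0 fin.
rewrite fsbig_supp -esum_fset //; try by move=> i _.
rewrite [RHS](esumID (a @^-1` [set~ 0])); last by move=> i _.
rewrite [X in _ + X]esum1 ?adde0 //.
by move=> i [_ /=]; apply: contra_notP.
Qed.

Lemma fsum_pair (I J : choiceType) (P : set I) (Q : I -> set J) (G : I -> J -> \bar R) :
  (forall i, P i -> finite_set (Q i)) -> (forall i j, 0 <= G i j) ->
  \sum_(i \in P) \sum_(j \in Q i) G i j = \sum_(p \in P `*`` Q) G p.1 p.2.
Proof.
move=> Qfin G0.
have inner i : P i -> \sum_(j \in Q i) G i j = \esum_(j in Q i) G i j.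
  by move=> Pi; rewrite esum_fset //; first exact: Qfin.
have le_in i j : P i -> Q i j -> G i j <= \esum_(j in Q i) G i j.
  move=> Pi Qij; apply: esum_ge; exists [set j]; last by rewrite fsbig_set1.
  by split; [apply: finite_set1| move=> ? ->].
set S := (P `*`` Q) `&` (fun p => G p.1 p.2) @^-1` [set~ 0].
have [Sfin|Sinf] := pselect (finite_set S).
  rewrite (eq_fsbigr (fun i => \esum_(j in Q i) G i j)); last by move=> i /set_mem /inner.
  have fin1 : finite_set (P `&` (fun i => \esum_(j in Q i) G i j) @^-1` [set~ 0]).
    apply: (sub_finite_set _ (finite_image fst Sfin)) => i [Pi /= hi].
    have : ~ (forall j, Q i j -> G i j = 0) by move=> h; apply: hi; rewrite esum1.
    by move=> /existsNP [j /not_implyP [Qij Gij]]; exists (i, j).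
  have E1 : \sum_(i \in P) \esum_(j in Q i) G i j = \esum_(i in P) \esum_(j in Q i) G i j.
    by apply: fsbig_esum => // i; apply: esum_ge0 => j _; apply: G0.
  have E2 : \sum_(p \in P `*`` Q) G p.1 p.2 = \esum_(p in P `*`` Q) G p.1 p.2.
    by apply: fsbig_esum.
  by rewrite E1 E2 esum_esum // => i j _ _; apply: G0.
rewrite [RHS]fsbig_dflt //; apply: fsbig_dflt => Afin; apply: Sinf.
apply: sub_finite_set (finite_setXR Afin (fun i hi => Qfin i hi.1)).
move=> [i j] [[/= Pi Qij] /= Gij]; split=> //=; split=> //.
rewrite inner //= => e; apply: Gij.
apply/eqP; rewrite eq_le G0 andbT -e; exact: le_in.
Qed.

End Sum.
Set Implicit Arguments. Unset Strict Implicit.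

Section Main.
Variable R : realType.
Variable D : set (pt R).

Definition Phi (p : tess R * (pt R * pt R)) : tess R * (pt R * pt R) :=
  (flipT D p.1 p.2, flipinv D p.1 p.2).

Lemma Phi_invol L p : TL D L p.1 -> flips D p.1 p.2 -> Phi (Phi p) = p.
Proof.
case: p => T F [hT _] hF /=.
have [_ [e1 e2]] := flip_invol hT hF.
by rewrite /Phi /= e1 e2.
Qed.

Lemma Phi_fun L p : lineish L -> TL D L p.1 -> flips D p.1 p.2 ->
  TL D L (Phi p).1 /\ flips D (Phi p).1 (Phi p).2.
Proof.
case: p => T F hL hTL hF /=.
have hT := hTL.1.
have [rel hT'] := flip_spec hT hF.
have [h1 _] := flip_invol hT hF.
split=> //; exact: TL_flip hL hTL rel hT'.
Qed.

Lemma key (L : set (set (pt R))) (hL : lineish L)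
  (phi : (pt R * pt R * ttype D)%type -> R) (phi_ge0 : forall z, 0 <= phi z) :
  (\sum_(T \in TL D L) \sum_(F \in flips D T)
      (phi (flipinv D T F, (flipT D T F : ttype D)))%:E)%E
  = (\sum_(T \in TL D L) \sum_(F \in flips D T) (phi (F, (T : ttype D)))%:E)%E.
Proof.
have Qfin T : TL D L T -> finite_set (flips D T) by move=> [hT _]; apply: flips_finite.
rewrite (fsum_pair (G := fun T F => (phi (flipinv D T F, (flipT D T F : ttype D)))%:E)) //;
  last by move=> *; rewrite lee_fin.
rewrite (fsum_pair (G := fun T F => (phi (F, (T : ttype D)))%:E)) //;
  last by move=> *; rewrite lee_fin.
have bij : set_bij (TL D L `*`` flips D) (TL D L `*`` flips D) Phi.
  split.
  - by move=> p [h1 h2]; apply: Phi_fun.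
  - move=> p q /set_mem [p1 p2] /set_mem [q1 q2] e.
    by rewrite -(Phi_invol p1 p2) -(Phi_invol q1 q2) e.
  - move=> q [q1 q2]; exists (Phi q); first by apply: Phi_fun.
    exact: Phi_invol q1 q2.
by rewrite (reindex_fsbig Phi _ _ (fun p => (phi (p.2, (p.1 : ttype D)))%:E) bij).
Qed.

Lemma lineish_lines (s : seq (R * R)) : lineish (lines_of s).
Proof.
move=> l [q _ ->] x y t hx hy; rewrite /lineP /= in hx hy *.
have -> : (x.1 + t * (y.1 - x.1)) * cos q.1 + (x.2 + t * (y.2 - x.2)) * sin q.1 =
  (x.1 * cos q.1 + x.2 * sin q.1) + t * ((y.1 * cos q.1 + y.2 * sin q.1) -
    (x.1 * cos q.1 + x.2 * sin q.1)) by ring.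
by rewrite hx hy subrr mulr0 addr0.
Qed.

Lemma poissonE_ext (G1 G2 : set (set (pt R)) -> \bar R) :
  (forall s, G1 (lines_of s) = G2 (lines_of s)) -> poissonE D G1 = poissonE D G2.
Proof.
move=> E; rewrite /poissonE.
rewrite (_ : (fun s => if indH D s then G1 (lines_of s) else 0%E) =
             (fun s => if indH D s then G2 (lines_of s) else 0%E)) //.
by apply/funext => s; rewrite E.
Qed.

End Main.

Theorem proposition3 (R : realType) (D : set (pt R)) (hD : is_cvx_polygon D)
  (phi : (pt R * pt R * ttype D)%type -> R)
  (phi_ge0 : forall z, 0 <= phi z) (phi_meas : measurable_fun setT phi) :
  muE D (fun T => (\sum_(F \in flips D T)
                     (phi (flipinv D T F, (flipT D T F : ttype D)))%:E)%E)
  = muE D (fun T => (\sum_(F \in flips D T) (phi (F, (T : ttype D)))%:E)%E).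
Proof.
rewrite /muE /unnorm; congr (_ * _)%E.
apply: poissonE_ext => s; apply: key => //; exact: lineish_lines.
Qed.
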